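(* Let $p$ be a prior probability density on $\mathcal{X}$, $L:\mathcal{X}\to[0,\infty)$ a likelihood, $Z(u) = \int_{\{x: L(x)>u\}} p(x)\,dx$, $w:[0,\infty)\to[0,\infty)$ a weight function and $W(u) = \int_0^u w(s)\,ds$. Consider the weighted slice sampler Markov chain $(X_n, U_n)$: given $X_n$, draw $U_{n+1}$ from the density $w(u)\,\mathbb{I}\{0\le u\le L(X_n)\}/W(L(X_n))$; then draw $X_{n+1}$ from the prior $p$ restricted to $\{x: L(x) > U_{n+1}\}$, i.e. with density $p(x)\,\mathbb{I}\{L(x) > U_{n+1}\}/Z(U_{n+1})$. Then for likelihood ordinates $y, z$ (with $W(y)>0$), $$\mathbb{P}\{L(X_{n+1}) \le z \mid L(X_n) = y\} = \int_0^{y\wedge z} \left\{1 - \frac{Z(z)}{Z(u)}\right\} \frac{w(u)}{W(y)}\, du.$$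
   Context: $y\wedge z = \min\{y,z\}$. This chain alternates between the conditionals of the weighted joint distribution $\pi_w(x,u) \propto w(u)\,\mathbb{I}\{0<u<L(x)\}\,p(x)$. *)

(* Defs.v *)
From HB Require Import structures.
From mathcomp Require Import all_boot all_order all_algebra.
From mathcomp Require Import all_classical all_reals all_analysis.
Set Implicit Arguments. Unset Strict Implicit. Unset Printing Implicit Defensive.
Import Order.TTheory GRing.Theory Num.Theory.
Local Open Scope classical_set_scope.
Local Open Scope ring_scope.
Local Open Scope ereal_scope.

Section WeightedSlice.
Context {d : measure_display} {T : measurableType d} {R : realType}.
(* nu : base measure "dx" on the state space; p : prior density w.r.t. nu;
   L : likelihood; w : weight function. *)
Variables (nu : {measure set T -> \bar R}) (p : T -> R) (L : T -> R) (w : R -> R).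

Definition Zmass (u : R) : \bar R :=
  \int[nu]_(x in [set x | (u < L x)%R]) (p x)%:E.

Definition Wcum (u : R) : \bar R :=
  \int[lebesgue_measure]_(s in `[0%R, u]) (w s)%:E.

Definition slice_density (x : T) (u : R) : \bar R :=
  (w u)%:E * (Wcum (L x))^-1.

Definition restricted_prior (u : R) (A : set T) : \bar R :=
  (\int[nu]_(x' in A `&` [set x' | (u < L x')%R]) (p x')%:E) * (Zmass u)^-1.

Definition wss_kernel (x : T) (A : set T) : \bar R :=
  \int[lebesgue_measure]_(u in `[0%R, L x]) (slice_density x u * restricted_prior u A).

End WeightedSlice.

(* Main.v *)
Require Import Defs.
From HB Require Import structures.
From mathcomp Require Import all_boot all_order all_algebra.
From mathcomp Require Import all_classical all_reals all_analysis.
From mathcomp Require Import measurable_realfun.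
Import Order.TTheory GRing.Theory Num.Theory.
Local Open Scope classical_set_scope.
Local Open Scope ring_scope.
Local Open Scope ereal_scope.

Lemma inv_meas (R : realType) : measurable_fun [set: R] (@GRing.inv R).
Proof.
have -> : [set: R] = [set x | x != 0%R] `|` [set 0%R].
  apply/seteqP; split => t //= _; case: (eqVneq t 0%R) => ?; [right|left] => //.
apply/measurable_funU => //.
- apply: open_measurable; exact: open_neq.
split; last exact: measurable_fun_set1.
apply: open_continuous_measurable_fun; first exact: open_neq.
by move=> t /set_mem /= t0; apply: inv_continuous.
Qed.

Lemma msetLgt d (T : measurableType d) (R : realType) (L : T -> R) u :
  measurable_fun setT L -> measurable [set x | (u < L x)%R].
Proof.
move=> mL; have := mL measurableT _ (@measurable_itv _ `]u, +oo[).
rewrite setTI; congr measurable; apply/seteqP; split => t /=;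
by rewrite in_itv /= andbT.
Qed.

Lemma msetLle d (T : measurableType d) (R : realType) (L : T -> R) u :
  measurable_fun setT L -> measurable [set x | (L x <= u)%R].
Proof.
move=> mL; have := mL measurableT _ (@measurable_itv _ `]-oo, u]).
rewrite setTI; congr measurable; apply/seteqP; split => t /=;
by rewrite in_itv /=.
Qed.

Theorem lemma4 (d : measure_display) (T : measurableType d) (R : realType)
  (nu : {measure set T -> \bar R}) (p : T -> R) (L : T -> R) (w : R -> R)
  (p_meas : measurable_fun setT p) (p_ge0 : forall x, (0 <= p x)%R)
  (p_prob : \int[nu]_x (p x)%:E = 1)
  (L_meas : measurable_fun setT L) (L_ge0 : forall x, (0 <= L x)%R)
  (w_meas : measurable_fun setT w) (w_ge0 : forall s, (0 <= w s)%R)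
  (x : T) (y z : R) (Lxy : L x = y)
  (Wy_pos : 0 < Wcum w y) (Wy_fin : Wcum w y < +oo)
  (Z_pos : forall u : R, (0 <= u)%R -> (u < y)%R -> 0 < Zmass nu p L u) :
  wss_kernel nu p L w x [set x' | (L x' <= z)%R] =
  \int[lebesgue_measure]_(u in `[0%R, Order.min y z])
     ((1 - Zmass nu p L z * (Zmass nu p L u)^-1) * ((w u)%:E * (Wcum w y)^-1)).
Proof.
have mp : measurable_fun setT (fun t => (p t)%:E) by exact: measurableT_comp.
have p0 : forall t, setT t -> 0 <= (p t)%:E by move=> t _; rewrite lee_fin.
set Ic := fun u => \int[nu]_(x' in [set x' | (L x' <= z)%R] `&` [set x' | (u < L x')%R]) (p x')%:E.
set Z := Zmass nu p L.
have mI u : measurable ([set x' | (L x' <= z)%R] `&` [set x' | (u < L x')%R]).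
  by apply: measurableI; [exact: msetLle|exact: msetLgt].
have Zb u : 0 <= Z u <= 1.
  apply/andP; split; first by apply: integral_ge0 => t _; rewrite lee_fin.
  rewrite -p_prob; apply: ge0_subset_integral => //; exact: msetLgt.
have Ib u : 0 <= Ic u <= 1.
  apply/andP; split; first by apply: integral_ge0 => t _; rewrite lee_fin.
  rewrite -p_prob; apply: ge0_subset_integral => //.
have Zm u1 u2 : (u1 <= u2)%R -> Z u2 <= Z u1.
  move=> u12; apply: ge0_subset_integral; try exact: msetLgt.
  - exact: measurable_funS mp.
  - by move=> t _; rewrite lee_fin.
  by move=> t /= /(le_lt_trans u12).
have Im u1 u2 : (u1 <= u2)%R -> Ic u2 <= Ic u1.
  move=> u12; apply: ge0_subset_integral => //.
  - exact: measurable_funS mp.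
  - by move=> t _; rewrite lee_fin.
  by move=> t /= [? /(le_lt_trans u12)].
have finb (e : \bar R) : 0 <= e <= 1 -> e = (fine e)%:E.
  by move=> /andP[e0 e1]; rewrite fineK// ge0_fin_numE// (le_lt_trans e1)// ltry.
pose Zr := fun u => fine (Z u).
pose Ir := fun u => fine (Ic u).
have ZE u : Z u = (Zr u)%:E by exact: finb (Zb u).
have IE u : Ic u = (Ir u)%:E by exact: finb (Ib u).
have key u : (u < z)%R -> Zr u = (Ir u + Zr z)%R.
  move=> uz; apply/EFin_inj; rewrite EFinD -ZE -IE -ZE.
  rewrite /Z /Zmass (_ : [set x0 | (u < L x0)%R] = ([set x' | (L x' <= z)%R] `&` [set x' | (u < L x')%R]) `|` [set x' | (z < L x')%R]).
    rewrite ge0_integral_setU //.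
    - exact: msetLgt.
    - exact: measurable_funS mp.
    - by move=> t _; rewrite lee_fin.
    apply/eqP/seteqP; split => // t [[/= tz _]]; by rewrite /= ltNge tz.
  apply/seteqP; split => t /=.
    by move=> ut; case: (leP (L t) z) => ?; [left|right].
  by case=> [[]|/(lt_trans uz)].
have I0 u : (z <= u)%R -> Ir u = 0%R.
  move=> zu; rewrite /Ir /Ic (_ : _ `&` _ = set0) ?integral_set0 //.
  apply/seteqP; split=> // t [/= tz ut].
  by have := le_lt_trans (le_trans tz zu) ut; rewrite ltxx.
have ZE' u : Zmass nu p L u = (Zr u)%:E := ZE u.
have IE' u : \int[nu]_(x' in [set x' | (L x' <= z)%R] `&` [set x' | (u < L x')%R]) (p x')%:E = (Ir u)%:E := IE u.
pose Wr := fine (Wcum w y).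
have WE : Wcum w y = Wr%:E.
  by rewrite /Wr fineK// ge0_fin_numE// ltW.
have Wr0 : (0 < Wr)%R by rewrite -lte_fin -WE.
have Zu0 u : (0 <= u)%R -> (u < y)%R -> (0 < Zr u)%R.
  by move=> u0 uy; rewrite -lte_fin -ZE'; exact: Z_pos.
pose h := fun u => (w u * Wr^-1 * (Ir u / Zr u))%R.
have mZr : measurable_fun setT Zr.
  apply: nonincreasing_measurable => // a b ab; rewrite -lee_fin -!ZE'; exact: Zm.
have mIr : measurable_fun setT Ir.
  apply: nonincreasing_measurable => // a b ab; rewrite -lee_fin -!IE; exact: Im.
have mh : measurable_fun setT h.
  apply: measurable_funM; first by apply: measurable_funM => //; exact: measurable_cst.
  apply: measurable_funM => //; exact: measurableT_comp (inv_meas _) mZr.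
have mEh D : measurable_fun D (EFin \o h).
  apply: measurable_funS (measurableT_comp _ mh) => //.
rewrite /wss_kernel /slice_density /restricted_prior Lxy.
have pt1 u : (0 <= u)%R -> (u < y)%R ->
  (w u)%:E / Wcum w y *
      (\int[nu]_(x' in [set x' | (L x' <= z)%R] `&` [set x' | (u < L x')%R])
          (p x')%:E / Zmass nu p L u) = (h u)%:E.
  move=> u0 uy; rewrite IE' ZE' WE !inver (gt_eqF Wr0) (gt_eqF (Zu0 u u0 uy)).
  by rewrite -!EFinM.
have pt2 u : (0 <= u)%R -> (u < y)%R -> (u < z)%R ->
  (1 - Z z / Z u) * ((w u)%:E / Wcum w y) = (h u)%:E.
  move=> u0 uy uz; rewrite !ZE WE !inver (gt_eqF Wr0) (gt_eqF (Zu0 u u0 uy)).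
  rewrite -!EFinM /h /=; congr EFin.
  have -> : Ir u = (Zr u - Zr z)%R by rewrite (key u uz) addrK.
  rewrite [RHS]mulrC; congr (_ * _)%R.
  by rewrite mulrBl divff ?(gt_eqF (Zu0 u u0 uy)).
rewrite -integral_itv_bndo_bndc; last first.
  apply: (eq_measurable_fun (EFin \o h)); last exact: mEh.
  move=> u /[!inE] /=; rewrite in_itv /= => /andP[u0 uy]; by rewrite pt1.
rewrite -integral_itv_bndo_bndc; last first.
  apply: (eq_measurable_fun (EFin \o h)); last exact: mEh.
  move=> u /[!inE] /=; rewrite in_itv /= lt_min => /andP[u0 /andP[uy uz]].
  by rewrite pt2.
transitivity (\int[lebesgue_measure]_(u in `[0%R, y[) (h u)%:E).
  apply: eq_integral => u /[!inE] /=; rewrite in_itv /= => /andP[u0 uy].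
  by rewrite pt1.
transitivity (\int[lebesgue_measure]_(u in `[0%R, Num.min y z[) (h u)%:E); last first.
  apply: eq_integral => u /[!inE] /=; rewrite in_itv /= lt_min => /andP[u0 /andP[uy uz]].
  by rewrite pt2.
rewrite [LHS]integral_mkcond [RHS]integral_mkcond.
apply: eq_integral => u _; rewrite !patchE !mem_setE /= !in_itv /= lt_min.
case: (leP 0%R u) => u0 //=; case: (ltP u y) => uy //=; case: (ltP u z) => uz //=.
by rewrite /h I0 // mul0r mulr0.
Qed.
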